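(* Let $n, r, d$ be positive integers with $n\geqslant r+1$ and $d\geqslant2$, and let $\delta=(d-2)/(d-1)$. Then $$\frac{1}{r}\binom{d+r}{d+1}\leqslant m\!\left(K_n^d, r\right)\leqslant\frac{(r+2d-1)^d-\delta^2(r-2)^d}{2\,d!}.$$
   Context: All graphs are finite, simple and undirected. For a nonnegative integer $r$ and a graph $G$, the $r$-neighbor bootstrap percolation process on $G$ starts with a set $A_0\subseteq V(G)$ of initially active vertices, and for $i\geqslant 1$, $A_i=A_{i-1}\cup\{v\in V(G) : |N(v)\cap A_{i-1}|\geqslant r\}$, where $N(v)$ is the set of neighbors of $v$. The set $A_0$ is a percolating set if $\bigcup_{i\geqslant 0}A_i=V(G)$. $m(G,r)$ denotes the minimum size of a percolating set of $G$ in the $r$-neighbor bootstrap percolation process. $K_n$ is the complete graph with vertex set $\{0,1,\ldots,n-1\}$, and $K_n^d$ is the Cartesian product of $d$ copies of $K_n$: its vertex set is $\{0,\ldots,n-1\}^d$ and two vertices are adjacent iff they differ in exactly one coordinate. *)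

(* Defs.v *)
From mathcomp Require Import all_boot all_order all_algebra.
Set Implicit Arguments. Unset Strict Implicit. Unset Printing Implicit Defensive.

Definition Knd_vertex (n d : nat) := {ffun 'I_d -> 'I_n}.

Definition Knd_adj (n d : nat) (u v : Knd_vertex n d) : bool :=
  #|[set i : 'I_d | u i != v i]| == 1.

Definition bp_step (n d r : nat) (A : {set Knd_vertex n d}) : {set Knd_vertex n d} :=
  A :|: [set v | r <= #|[set u in A | Knd_adj u v]|].

Definition bp_iter (n d r : nat) (A0 : {set Knd_vertex n d}) (i : nat) :=
  iter i (bp_step r) A0.

Definition percolating (n d r : nat) (A0 : {set Knd_vertex n d}) : Prop :=
  forall v : Knd_vertex n d, exists i, v \in bp_iter r A0 i.

(* Main.v *)
Require Import Defs.
From mathcomp Require Import all_boot all_order all_algebra.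
From mathcomp Require Import fingroup perm zify ring lra.
Import GRing.Theory Num.Theory.
Set Implicit Arguments. Unset Strict Implicit. Unset Printing Implicit Defensive.
Section Perc.
Variables (n d r : nat).
Notation V := (Knd_vertex n d).

Lemma bp_iter_mono (A : {set V}) i j : i <= j -> bp_iter r A i \subset bp_iter r A j.
Proof.
move/subnK => <-; elim: (j - i) => [|k IH] //=.
apply: subset_trans IH _; rewrite /bp_iter /= /bp_step; exact: subsetUl.
Qed.

Lemma perc_ind (A : {set V}) (P : V -> Prop) :
  percolating r A -> (forall a, a \in A -> P a) ->
  (forall (S : {set V}) v, (forall u, u \in S -> P u) ->
       r <= #|[set u in S | Knd_adj u v]| -> P v) ->
  forall v, P v.
Proof.
move=> perc HA Hstep v; have [i Hi] := perc v.
elim: i v Hi => [|i IH] v /=; first exact: HA.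
rewrite /bp_step in_setU => /orP[/IH//|]; rewrite inE => Hv.
exact: Hstep Hv.
Qed.
End Perc.

Section Vander.
Local Open Scope ring_scope.
Lemma vander_zero (r : nat) (c : 'I_r -> rat) (s : seq rat) :
  uniq s -> (r <= size s)%N ->
  (forall t, t \in s -> \sum_(j < r) c j * t ^+ j = 0) -> forall j, c j = 0.
Proof.
move=> us rs H j.
pose p : {poly rat} := \poly_(i < r) (if insub i is Some k then c k else 0%R).
have p0 : p = 0%R.
  apply: (roots_geq_poly_eq0 (rs := s)) => //; last by apply: leq_trans (size_poly _ _) rs.
  apply/allP => t ts; rewrite /root horner_poly; apply/eqP; rewrite -[RHS](H t ts).
  by apply: eq_bigr => i _; rewrite (valK i).
have := congr1 (fun q : {poly rat} => q`_j) p0.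
by rewrite coef_poly ltn_ord (valK j) coef0.
Qed.
End Vander.
Section Grid.
Local Open Scope ring_scope.

Definition vmx (r n : nat) (Hrn : (r <= n)%N) (mu : 'I_n -> rat) : 'M[rat]_r :=
  \matrix_(a, j) mu (widen_ord Hrn a) ^+ j.

Lemma dual_weights (r n : nat) (Hrn : (r <= n)%N) (mu : 'I_n -> rat) (Hmu : injective mu) :
  forall j j' : 'I_r,
    \sum_(a < r) invmx (vmx Hrn mu) j a * mu (widen_ord Hrn a) ^+ j' = (j == j')%:R.
Proof.
have uV : vmx Hrn mu \in unitmx.
  rewrite -unitmx_tr -row_free_unit; apply: inj_row_free => c Hc.
  apply/rowP => j; rewrite mxE.
  apply: (vander_zero (c := fun j => c 0 j) (s := [seq mu (widen_ord Hrn a) | a <- enum 'I_r])).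
  - rewrite map_inj_uniq ?enum_uniq // => a b /Hmu /(congr1 val) /= ?; exact: val_inj.
  - by rewrite size_map size_enum_ord.
  - move=> t /mapP[a _ ->]; have := congr1 (fun M : 'rV[rat]_r => M 0 a) Hc.
    rewrite [LHS]mxE [RHS]mxE => H0; rewrite -[RHS]H0; apply: eq_bigr => i _; rewrite !mxE.
    done.
move=> j j'.
have := congr1 (fun M : 'M[rat]_r => M j j') (mulVmx uV).
rewrite [LHS]mxE [RHS]mxE => H0; rewrite -[RHS]H0; apply: eq_bigr => a _; rewrite mxE.
done.
Qed.

Lemma grid_zero (k r n : nat) (Hrn : (r <= n)%N) (mu : 'I_k -> 'I_n -> rat)
  (Hmu : forall l, injective (mu l)) (G : {ffun 'I_k -> 'I_r} -> rat) :
  (forall g : {ffun 'I_k -> 'I_n},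
     \sum_(J : {ffun 'I_k -> 'I_r}) G J * \prod_(l < k) mu l (g l) ^+ J l = 0) ->
  forall J, G J = 0.
Proof.
move=> H J.
pose W l := invmx (vmx Hrn (mu l)).
have E : G J = \sum_(g : {ffun 'I_k -> 'I_r}) (\prod_l W l (J l) (g l)) *
     \sum_(J' : {ffun 'I_k -> 'I_r}) G J' * \prod_(l < k) mu l (widen_ord Hrn (g l)) ^+ J' l.
  transitivity (\sum_(J' : {ffun 'I_k -> 'I_r}) G J' *
      \prod_(l < k) \sum_(a < r) W l (J l) a * mu l (widen_ord Hrn a) ^+ J' l).
    rewrite (bigD1 J) //= [X in _ + X]big1 => [|J' nJ']; last first.
      have : [exists l, J' l != J l].
        apply: contraNT nJ' => /existsPn Hn; apply/eqP/ffunP => l; apply/eqP.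
        by move: (Hn l); rewrite negbK.
      case/existsP => l Hl.
      by rewrite (bigD1 l) //= dual_weights // eq_sym (negbTE Hl) mul0r mulr0.
    rewrite addr0 big1 ?mulr1 // => l _.
    by rewrite dual_weights // eqxx.
  symmetry; under eq_bigr do rewrite mulr_sumr.
  rewrite exchange_big /=; apply: eq_bigr => J' _.
  rewrite bigA_distr_bigA mulr_sumr; apply: eq_bigr => g _.
  by rewrite big_split /= mulrCA.
rewrite E big1 // => g _.
have -> : (\sum_(J' : {ffun 'I_k -> 'I_r}) G J' *
   \prod_(l < k) mu l (widen_ord Hrn (g l)) ^+ J' l) = 0; last by rewrite mulr0.
rewrite -[RHS](H [ffun l => widen_ord Hrn (g l)]); apply: eq_bigr => J' _.
by congr (_ * _); apply: eq_bigr => l _; rewrite ffunE.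
Qed.
End Grid.
Section Lower.
Local Open Scope ring_scope.
Variables (n d m : nat).
Hypothesis Hn : (m.+1 < n)%N.
Notation r := m.+1.
Notation V := (Knd_vertex n d).

Definition lam (l : nat) (a : 'I_n) : rat := (l * n + a)%:R.

Lemma lam_inj l l' a a' : lam l a = lam l' a' -> l = l' /\ a = a'.
Proof.
move/eqP; rewrite /lam eqr_nat => /eqP E.
have n0 : (0 < n)%N by apply: leq_trans Hn.
have E1 := congr1 (fun x => x %/ n)%N E; have E2 := congr1 (fun x => x %% n)%N E.
move: E1 E2 => /=; rewrite !divnMDl // !modnMDl !divn_small // !modn_small // !addn0.
by move=> -> /val_inj.
Qed.

Definition Pt (v : V) (t : rat) (l : 'I_d.+1) : rat :=
  if unlift ord_max l is Some l' then lam l' (v l') else t.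

Definition St := [set t : (d.+1).-tuple 'I_m.+1 | sorted leq (map val t)].
Definition NN := #|St|.
Definition key (J : {ffun 'I_d.+1 -> 'I_r}) : seq nat :=
  sort leq [seq val (J l) | l <- enum 'I_d.+1].
Definition sv (i : 'I_NN) : seq nat := map val (enum_val i : (d.+1).-tuple 'I_r).
Definition Tx (x : 'rV[rat]_NN) J := \sum_(i < NN) x 0 i * (key J == sv i)%:R.
Definition Fx x (X : 'I_d.+1 -> rat) :=
  \sum_(J : {ffun 'I_d.+1 -> 'I_r}) Tx x J * \prod_l X l ^+ J l.
Definition cfB (i : 'I_NN) (v : V) (j : 'I_r) :=
  \sum_(J : {ffun 'I_d.+1 -> 'I_r} | J ord_max == j)
     (key J == sv i)%:R * \prod_(l < d) lam l (v l) ^+ J (lift ord_max l).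
Definition cf (x : 'rV[rat]_NN) (v : V) (j : 'I_r) := \sum_(i < NN) x 0 i * cfB i v j.

Lemma Fx_Pt x v t : Fx x (Pt v t) = \sum_(j < r) cf x v j * t ^+ j.
Proof.
rewrite /Fx (partition_big (fun J : {ffun 'I_d.+1 -> 'I_r} => J ord_max) xpredT) //=.
apply: eq_bigr => j _.
rewrite /cf /cfB mulr_suml; under [RHS]eq_bigr do rewrite mulr_sumr mulr_suml.
rewrite [RHS]exchange_big /=; apply: eq_bigr => J /eqP HJ.
rewrite /Tx mulr_suml; apply: eq_bigr => i _.
rewrite (bigD1_ord ord_max) //= /Pt unlift_none HJ.
under eq_bigr do rewrite liftK.
ring.
Qed.

Lemma Fx_ext x X Y : X =1 Y -> Fx x X = Fx x Y.
Proof.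
by move=> E; apply: eq_bigr => J _; congr (_ * _); apply: eq_bigr => l _; rewrite E.
Qed.

Lemma key_perm (K : {ffun 'I_d.+1 -> 'I_r}) (s : 'S_d.+1) :
  key [ffun l => K (s l)] = key K.
Proof.
apply/perm_sortP; [exact: leq_total | exact: leq_trans | exact: anti_leq |].
rewrite (eq_map (g := (fun l => val (K l)) \o s)); last by move=> l; rewrite ffunE.
rewrite map_comp; apply: perm_map.
apply: uniq_perm; [by rewrite map_inj_uniq ?enum_uniq //; exact: perm_inj | exact: enum_uniq |].
move=> l; rewrite mem_enum; apply/mapP; exists (s^-1 l)%g; first by rewrite mem_enum.
by rewrite permKV.
Qed.

Lemma Fx_perm x (X : 'I_d.+1 -> rat) (s : 'S_d.+1) : Fx x (fun l => X (s l)) = Fx x X.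
Proof.
rewrite /Fx (reindex_inj (h := fun K : {ffun 'I_d.+1 -> 'I_r} => [ffun l => K (s l)])) /=; last first.
  move=> K1 K2 /ffunP E; apply/ffunP => l; have := E ((s^-1)%g l); rewrite !ffunE permKV.
  done.
apply: eq_bigr => K _; rewrite /Tx key_perm; congr (_ * _).
rewrite [RHS](reindex_inj (@perm_inj _ s)) /=.
by apply: eq_bigr => l _; rewrite ffunE.
Qed.

Lemma Pt_swap (u v : V) (i : 'I_d) : (forall l, l != i -> u l = v l) ->
  (fun l => Pt v (lam i (u i)) (tperm (lift ord_max i) ord_max l)) =1 Pt u (lam i (v i)).
Proof.
move=> H l; case: (unliftP ord_max l) => [l'|] ->.
  case: (eqVneq l' i) => [->|nli].
    by rewrite tpermL /Pt unlift_none liftK.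
  rewrite tpermD; last by exact: neq_lift.
    by rewrite /Pt liftK H.
  by rewrite (inj_eq (@lift_inj _ _)) eq_sym.
by rewrite tpermR /Pt unlift_none liftK.
Qed.

Definition dead (x : 'rV[rat]_NN) (v : V) := forall j, cf x v j = 0.

Lemma dead_step x (S : {set V}) v : (forall u, u \in S -> dead x u) ->
   (r <= #|[set u in S | Knd_adj u v]|)%N -> dead x v.
Proof.
move=> HS Hc.
set Nb := [set u in S | Knd_adj u v] in Hc.
pose tau (u : V) := \sum_(i < d | u i != v i) lam i (u i).
have Hnb : forall u, u \in Nb -> exists i,
    [/\ forall l, (u l != v l) = (l == i), tau u = lam i (u i) & u \in S].
  move=> u; rewrite inE => /andP[uS]; rewrite /Knd_adj => /cards1P[i Hi].
  have Hl : forall l, (u l != v l) = (l == i).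
    by move=> l; have := congr1 (fun X : {set 'I_d} => l \in X) Hi; rewrite !inE.
  exists i; split => //.
  by rewrite /tau (eq_bigl (pred1 i)) ?big_pred1_eq // => l; rewrite /= Hl.
apply: (vander_zero (s := [seq tau u | u <- enum Nb])).
- rewrite map_inj_in_uniq ?enum_uniq // => u1 u2; rewrite !mem_enum => H1 H2 Ht.
  have [i1 [Hl1 Ht1 _]] := Hnb u1 H1; have [i2 [Hl2 Ht2 _]] := Hnb u2 H2.
  move: Ht; rewrite Ht1 Ht2 => /lam_inj [/val_inj E12 E]; subst i2.
  apply/ffunP => l; case: (eqVneq l i1) => [->//|nl].
  move: (Hl1 l) (Hl2 l); rewrite (negbTE nl) => /negbT/negPn/eqP -> /negbT/negPn/eqP ->.
  done.
- by rewrite size_map -cardE.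
- move=> t /mapP[u]; rewrite mem_enum => uNb ->.
  have [i [Hl Ht uS]] := Hnb u uNb.
  rewrite Ht -Fx_Pt -(Fx_perm _ _ (tperm (lift ord_max i) ord_max)).
  rewrite (Fx_ext _ (Pt_swap _)); last first.
    by move=> l nl; apply/eqP; move: (Hl l); rewrite (negbTE nl) => /negbT/negPn.
  rewrite Fx_Pt big1 // => j _; by rewrite (HS u uS j) mul0r.
Qed.

Lemma Tx_recover x (i : 'I_NN) : Tx x [ffun l => tnth (enum_val i) l] = x 0 i.
Proof.
have Hk : key [ffun l => tnth (enum_val i) l] = sv i.
  rewrite /key (eq_map (g := val \o (tnth (enum_val i)))); last by move=> l; rewrite ffunE.
  rewrite map_comp map_tnth_enum sorted_sort //; first exact: leq_trans.
  by have := enum_valP i; rewrite inE.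
rewrite /Tx Hk (bigD1 i) //= eqxx mulr1 big1 ?addr0 // => i' ni'.
suff /negbTE -> : sv i != sv i' by rewrite mulr0.
apply: contra ni' => /eqP E; apply/eqP; apply: enum_val_inj; apply: val_inj.
symmetry; exact: (inj_map val_inj E).
Qed.

Lemma lower_bound (A : {set V}) : percolating m.+1 A -> ('C(d.+1 + m, d.+1) <= #|A| * r)%N.
Proof.
move=> perc.
have HNN : NN = 'C(d.+1 + m, d.+1) by rewrite /NN /St card_sorted_tuples.
rewrite -HNN.
pose C := #|{: 'I_#|A| * 'I_r}|.
have HC : C = (#|A| * r)%N by rewrite /C card_prod !card_ord.
rewrite -HC leqNgt; apply/negP => HNC.
pose Mx : 'M[rat]_(NN, C) :=
  \matrix_(i, k) cfB i (enum_val (enum_val k).1) (enum_val k).2.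
have nrf : ~~ row_free Mx.
  apply/negP => /eqP E; move: (rank_leq_col Mx); rewrite E leqNgt HNC.
  done.
have Hk : kermx Mx != 0 by rewrite kermx_eq0.
have : [exists i, row i (kermx Mx) != 0].
  apply: contraNT Hk => /existsPn Hn'; apply/eqP/row_matrixP => i; rewrite row0.
  by apply/eqP; move: (Hn' i); rewrite negbK.
case/existsP => i0 Hi0.
set x := row i0 (kermx Mx) in Hi0.
have xM : x *m Mx = 0 by rewrite /x -row_mul mulmx_ker row0.
have HA : forall a, a \in A -> dead x a.
  move=> a Ha j.
  pose k := enum_rank (enum_rank_in Ha a, j).
  have := congr1 (fun M : 'rV[rat]_C => M 0 k) xM.
  rewrite [LHS]mxE [RHS]mxE => <-; apply: eq_bigr => i _.
  by rewrite /k !mxE enum_rankK /= enum_rankK_in.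
have Hall : forall v, dead x v.
  apply: (perc_ind perc HA) => S v HS Hc; exact: dead_step HS Hc.
have Hrn : (r <= n)%N by apply: ltnW.
have HT : forall J, Tx x J = 0.
  apply: (grid_zero (k := d.+1) Hrn (mu := fun l a => lam l a)).
    by move=> l a b /lam_inj [].
  move=> g.
  pose v : V := [ffun l => g (lift ord_max l)].
  transitivity (Fx x (Pt v (lam d (g ord_max)))).
    apply: eq_bigr => J _; congr (_ * _); apply: eq_bigr => l _.
    rewrite /Pt; case: (unliftP ord_max l) => [l'|] ->; first by rewrite /v ffunE lift_max.
    done.
  by rewrite Fx_Pt big1 // => j _; rewrite Hall mul0r.
move: Hi0; suff -> : x = 0 by rewrite eqxx.
apply/rowP => i; rewrite -Tx_recover HT.
by rewrite mxE.
Qed.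
End Lower.
Section Upper.
Variables (n' d r : nat).
Notation n := n'.+1.
Hypothesis Hr : 0 < r.
Hypothesis Hrn : r < n.
Hypothesis Hd : 0 < d.
Notation V := (Knd_vertex n d).

Definition wt (v : V) := \sum_(i < d) (v i : nat).
Definition Aset := [set v : V | (wt v < r) && (wt v %% d == (r - 1) %% d)].
Definition upd (v : V) (i : 'I_d) (a : 'I_n) : V := [ffun l => if l == i then a else v l].

Lemma wt_upd v i a : wt (upd v i a) + v i = wt v + a.
Proof.
have E : forall w : V, wt w = w i + \sum_(l < d | l != i) (w l : nat).
  by move=> w; rewrite /wt (bigD1 i).
rewrite !E; have -> : \sum_(l < d | l != i) (upd v i a l : nat) = \sum_(l < d | l != i) (v l : nat).
  by apply: eq_bigr => l /negbTE nl; rewrite ffunE nl.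
rewrite ffunE eqxx; lia.
Qed.

Lemma vi_le_wt (v : V) i : v i <= wt v.
Proof. by rewrite /wt (bigD1 i) // leq_addr. Qed.

Lemma adj_upd (v : V) i a : a != v i -> Knd_adj (upd v i a) v.
Proof.
move=> Ha; apply/cards1P; exists i; apply/setP => l; rewrite !inE ffunE.
by case: (eqVneq l i) => [->|]; rewrite ?Ha ?eqxx.
Qed.

Lemma upd_inj_in (v : V) : {in [pred p : 'I_d * 'I_n | p.2 != v p.1] &,
   injective (fun p => upd v p.1 p.2)}.
Proof.
move=> [i a] [i' a']; rewrite !inE /= => H1 H2 /ffunP E.
have := E i; have := E i'; rewrite !ffunE !eqxx.
case: (eqVneq i' i) => [-> _ -> //|ni].
by move=> Ha'; move: H2; rewrite -Ha' eqxx.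
Qed.

Lemma card_pairs (P : 'I_d -> 'I_n -> bool) :
  #|[set p : 'I_d * 'I_n | P p.1 p.2]| = \sum_(i < d) #|[set a | P i a]|.
Proof.
transitivity (\sum_(i < d) \sum_(a < n) (if P i a then 1 else 0)).
  rewrite -sum1_card big_mkcond [RHS]pair_bigA.
  by rewrite (eq_bigr (fun p => if P p.1 p.2 then 1 else 0)) => [//|p _]; rewrite inE.
apply: eq_bigr => i _; rewrite -sum1_card [RHS]big_mkcond.
by apply: eq_bigr => a _; rewrite inE.
Qed.

Lemma count_good (v : V) : v \notin Aset ->
  r <= #|[set p : 'I_d * 'I_n | (p.2 < v p.1) || ((v p.1 < p.2) && (upd v p.1 p.2 \in Aset))]|.
Proof.
move=> vA.
rewrite (card_pairs (fun i a => (a < v i) || ((v i < a) && (upd v i a \in Aset)))).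
pose g := (r.-1 - wt v)%N.
pose c := if wt v < r then (g %/ d).+1 else 0.
have Hgi : forall i, v i + c <= #|[set a : 'I_n | (a < v i) || ((v i < a) && (upd v i a \in Aset))]|.
  move=> i.
  pose L := [set widen_ord (ltnW (ltn_ord (v i))) x | x : 'I_(v i)].
  have cL : #|L| = v i.
    by rewrite card_imset ?card_ord // => x y /(congr1 val) /= /val_inj.
  case: (ltnP (wt v) r) => Hw.
    have Hc : c = (g %/ d).+1 by rewrite /c Hw.
    pose f (s : 'I_c) : 'I_n := inord (v i + g - d * s).
    have Hs : forall s : 'I_c, d * s <= g.
      move=> s; have Hsq : (s : nat) <= g %/ d by rewrite -ltnS -Hc ltn_ord.
      by apply: leq_trans (leq_divM g d); rewrite mulnC leq_mul2r Hsq orbT.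
    have Hwr : wt v + g = r.-1 by rewrite /g subnKC // -ltnS prednK.
    have Hlt : forall s : 'I_c, v i + g - d * s < n.
      move=> s; have := vi_le_wt v i; lia.
    have fE : forall s : 'I_c, f s = v i + g - d * s :> nat by move=> s; rewrite inordK.
    have gmod : g %% d != 0.
      apply: contra vA => /eqP gm; rewrite inE Hw /=.
      have := divn_eq g d; rewrite gm addn0 => gq.
      by rewrite subn1 -Hwr gq addnC modnMDl.
    have Hs' : forall s : 'I_c, d * s < g.
      move=> s; have Hsq : (s : nat) <= g %/ d by rewrite -ltnS -Hc ltn_ord.
      have := Hs s; have := divn_eq g d => gq _.
      have : d * s <= d * (g %/ d) by rewrite leq_mul2l Hsq orbT.
      move: gmod; rewrite -lt0n; lia.
    pose U := [set f s | s : 'I_c].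
    have cU : #|U| = c.
      rewrite card_imset ?card_ord // => s1 s2 /(congr1 (@nat_of_ord n)); rewrite !fE => E.
      apply/eqP; rewrite -val_eqE /= -(eqn_pmul2l Hd); apply/eqP.
      have := Hs s1; have := Hs s2; lia.
    have LU : L :&: U = set0.
      apply/setP => a; rewrite !inE; apply/negP => /andP[/imsetP[x _ ->] /imsetP[s _ E]].
      have := congr1 (@nat_of_ord n) E; rewrite fE /= => E'.
      have := ltn_ord x; have := Hs' s; lia.
    apply: leq_trans (_ : #|L :|: U| <= _).
      by rewrite -[#|L :|: U|]addn0 -(cards0 'I_n) -LU cardsUI cL cU.
    apply: subset_leq_card; apply/subsetP => a; rewrite !inE => /orP[/imsetP[x _ ->]|/imsetP[s _ ->]].
      by rewrite /= ltn_ord.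
    apply/orP; right; rewrite fE; apply/andP; split.
      by have := Hs' s; lia.
    have Hwu := wt_upd v i (f s); rewrite fE in Hwu.
    have Hwu' : wt (upd v i (f s)) = r.-1 - d * s by have := Hs s; lia.
    rewrite Hwu'; apply/andP; split; first by have := Hr; lia.
    have -> : r - 1 = (r.-1 - d * s) + s * d by have := Hs s; rewrite mulnC; lia.
    by rewrite addnC modnMDl.
  apply: leq_trans (_ : #|L| <= _); first by rewrite cL /c ltnNge Hw addn0.
  apply: subset_leq_card; apply/subsetP => a; rewrite !inE => /imsetP[x _ ->].
  by rewrite /= ltn_ord.
have Hsum : r <= \sum_(i < d) (v i + c).
  rewrite big_split /= sum_nat_const card_ord -/(wt v).
  rewrite /c; case: ifP => Hw; last by rewrite muln0 addn0 leqNgt Hw.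
  have := divn_eq g d; have := ltn_pmod g Hd.
  rewrite /g; nia.
apply: leq_trans Hsum _; apply: leq_sum => i _; exact: Hgi i.
Qed.

Lemma upper_perc : percolating r Aset.
Proof.
have main : forall k v, wt v < k -> v \in bp_iter r Aset k.
  elim=> [//|k IH] v Hv.
  case: (boolP (v \in Aset)) => vA.
    by apply: (subsetP (bp_iter_mono _ _ (leq0n k.+1))).
  rewrite /bp_iter /= /bp_step in_setU; apply/orP; right; rewrite inE.
  apply: leq_trans (count_good vA) _.
  rewrite -(card_in_imset (f := fun p : 'I_d * 'I_n => upd v p.1 p.2)
     (D := [set p : 'I_d * 'I_n | (p.2 < v p.1) || ((v p.1 < p.2) && (upd v p.1 p.2 \in Aset))])); last first.
    have Hne : forall p : 'I_d * 'I_n, p \in [set p : 'I_d * 'I_n | (p.2 < v p.1) ||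
         ((v p.1 < p.2) && (upd v p.1 p.2 \in Aset))] -> p.2 != v p.1.
      by move=> p; rewrite inE -val_eqE => /orP[/ltn_eqF|/andP[/gtn_eqF]] ->.
    by move=> p q Hp Hq; apply: upd_inj_in; rewrite inE /= Hne.
  apply: subset_leq_card; apply/subsetP => u /imsetP[[i a] Hp ->].
  rewrite inE /= in Hp; rewrite inE adj_upd ?andbT; last first.
    by rewrite -val_eqE; case/orP: Hp => [/ltn_eqF|/andP[/gtn_eqF]] ->.
  case/orP: Hp => [Hlt|/andP[_ HA]].
    apply: IH; rewrite -(ltn_add2r (v i)) wt_upd.
    by apply: leq_trans (_ : wt v + v i <= _); [rewrite ltn_add2l | rewrite leq_add2r -ltnS].
  by apply: (subsetP (bp_iter_mono _ _ (leq0n k))).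
by move=> v; exists (wt v).+1; apply: main.
Qed.
End Upper.
Section Size.
Variables (n' d r : nat).
Notation n := n'.+1.
Hypothesis Hr : 0 < r.
Hypothesis Hd : 0 < d.
Notation V := (Knd_vertex n d).
Notation M' := (r + 2 * d - 3).

Definition PS (v : V) (j : nat) := \sum_(l < d | l <= j) (v l : nat).
Definition FF (v : V) (t : 'I_d) (j : nat) := j + t + PS v j.

Lemma PS_mono v x y : x <= y -> PS v x <= PS v y.
Proof.
move=> xy; rewrite /PS big_mkcond [X in _ <= X]big_mkcond; apply: leq_sum => l _.
by case: ifP => // lx; rewrite (leq_trans lx xy).
Qed.

Lemma PS_step v (j : 'I_d) : 0 < j -> PS v j = PS v j.-1 + v j.
Proof.
move=> j0; rewrite /PS (bigD1 j) //= addnC; congr (_ + _).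
apply: eq_bigl => l; rewrite -val_eqE /=; apply/idP/idP.
  by move=> /andP[]; lia.
by move=> H; apply/andP; split; lia.
Qed.

Lemma PS_0 v : PS v 0 = v (Ordinal Hd).
Proof.
rewrite /PS (bigD1 (Ordinal Hd)) //= big_pred0 ?addn0 // => l.
by rewrite -val_eqE /=; apply/negbTE; apply/negP => /andP[]; lia.
Qed.

Lemma PS_last v : PS v d.-1 = wt v.
Proof.
by rewrite /PS /wt; apply: eq_bigl => l; rewrite -ltnS prednK ?ltn_ord.
Qed.

Definition psi (v : V) (t : 'I_d) : d.-tuple 'I_M'.+1 := [tuple inord (FF v t j) | j < d].

Lemma FF_bound v t (j : 'I_d) : v \in Aset n' d r -> FF v t j < M'.+1.
Proof.
rewrite inE => /andP[wr _].
have jd : j <= d.-1 by rewrite -ltnS prednK.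
have := PS_mono v jd; rewrite PS_last /FF; have := ltn_ord t; have := ltn_ord j; lia.
Qed.

Lemma psi_sorted v t : v \in Aset n' d r -> sorted ltn (map val (psi v t)).
Proof.
move=> vA.
have E : map val (psi v t) = map (FF v t) (iota 0 d).
  transitivity (map (fun j : 'I_d => FF v t j) (enum 'I_d)).
    by rewrite /psi /= -map_comp; apply: eq_map => j /=; rewrite inordK // FF_bound.
  by rewrite -val_enum_ord -map_comp.
rewrite E; apply: (homo_sorted (e := ltn)); last exact: iota_ltn_sorted.
by move=> x y xy; rewrite /FF; have := PS_mono v (ltnW xy); lia.
Qed.

Lemma psi_inj v v' t t' : v \in Aset n' d r -> v' \in Aset n' d r ->
  psi v t = psi v' t' -> v = v' /\ t = t'.
Proof.
move=> vA v'A E.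
have HF : forall j : 'I_d, FF v t j = FF v' t' j.
  move=> j; have := congr1 (fun s => tnth s j) E; rewrite !tnth_mktuple => /(congr1 val).
  by rewrite /= !inordK ?FF_bound.
have H0 := HF (Ordinal Hd); rewrite /FF !PS_0 /= in H0.
have Hs : forall j : 'I_d, 0 < j -> v j = v' j.
  move=> j j0.
  have jp : j.-1 < d by apply: leq_ltn_trans (leq_pred j) (ltn_ord j).
  apply: val_inj => /=; have := HF j; have := HF (Ordinal jp); rewrite /FF /= !(PS_step _ j0); lia.
have jl : d.-1 < d by rewrite prednK.
have Hl := HF (Ordinal jl); rewrite /FF /= !PS_last in Hl.
move: vA v'A; rewrite !inE => /andP[_ /eqP m1] /andP[_ /eqP m2].
have tt' : t = t'.
  apply: val_inj => /=.
  have : (wt v + t) %% d = (wt v' + t') %% d by congr (_ %% d); lia.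
  rewrite -modnDml m1 -[in RHS]modnDml m2 => /eqP; rewrite eqn_modDl.
  by rewrite !modn_small ?ltn_ord // => /eqP.
subst t'; split => //; apply/ffunP => j.
case: (posnP j) => [j0|]; last by move/Hs.
have -> : j = Ordinal Hd by apply: val_inj.
apply/eqP; rewrite -val_eqE; apply/eqP; move: H0 => /=; lia.
Qed.

Lemma size_bound : #|Aset n' d r| * d <= 'C(M'.+1, d).
Proof.
rewrite -[X in _ * X]card_ord -cardsT -cardsX -card_ltn_sorted_tuples.
rewrite -(card_in_imset (f := fun p => psi p.1 p.2) (D := setX (Aset n' d r) [set: 'I_d])); last first.
  move=> [v t] [v' t']; rewrite !in_setX !in_setT /= !andbT => vA v'A /(psi_inj vA v'A) [-> ->].
  done.
apply: subset_leq_card; apply/subsetP => s /imsetP[[v t] Hp ->]; rewrite inE.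
by apply: psi_sorted; move: Hp; rewrite in_setX in_setT /= andbT.
Qed.
End Size.
Lemma ffact_le_exp K d : (K ^_ d <= K ^ d)%N.
Proof.
rewrite ffact_prod; apply: leq_trans (leq_prod (E2 := fun _ => K) _) _.
  by move=> i _; apply: leq_subr.
by rewrite prod_nat_const card_ord.
Qed.

Local Open Scope ring_scope.

Theorem theorem4p4 (n r d : nat) :
  (0 < r)%N -> (r + 1 <= n)%N -> (2 <= d)%N ->
  let delta : rat := (d%:R - 2) / (d%:R - 1) in
  let lower : rat := (1 / r%:R) * ('C(d + r, d + 1))%:R in
  let upper : rat :=
    ((r%:R + 2 * d%:R - 1) ^+ d - delta ^+ 2 * (r%:R - 2) ^+ d) / (2 * (d`!)%:R) in
  (forall A : {set Knd_vertex n d}, percolating r A -> lower <= (#|A|)%:R) /\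
  (exists A : {set Knd_vertex n d}, percolating r A /\ (#|A|)%:R <= upper).
Proof.
move=> Hr Hrn Hd delta lower upper; split.
  move=> A perc; clear upper delta.
  case: r Hr Hrn perc @lower => // m _ Hrn perc lower.
  have Hn : (m.+1 < n)%N by rewrite -addn1.
  have := lower_bound Hn perc.
  have -> : (d.+1 + m = d + m.+1)%N by rewrite addSn addnS.
  move=> H.
  rewrite /lower div1r mulrC ler_pdivrMr ?ltr0n // -natrM ler_nat.
  by rewrite addn1.
case: n Hrn => [|n'] Hrn; first by move: Hrn; rewrite addn1.
have Hd0 : (0 < d)%N by apply: leq_trans Hd.
have Hrn' : (r < n'.+1)%N by rewrite -addn1.
exists (Aset n' d r); split; first exact: upper_perc.
have Hs := size_bound n' Hr Hd0.
set K := (r + 2 * d - 3).+1 in Hs.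
have H1 : (#|Aset n' d r| * d * d`! <= K ^ d)%N.
  by apply: leq_trans (ffact_le_exp K d); rewrite -bin_ffact leq_mul2r Hs orbT.
have H1' : (#|Aset n' d r|%:R * d%:R * (d`!)%:R <= (K%:R : rat) ^+ d).
  by rewrite -!natrM -natrX ler_nat.
have En : (K + 2 = r + 2 * d)%N by rewrite /K; lia.
have En' : (K%:R : rat) + 2 = r%:R + 2 * d%:R.
  by rewrite -natrM -!natrD En.
have r1 : (1 : rat) <= r%:R by rewrite ler1n.
have D2 : (2 : rat) <= d%:R by rewrite ler_nat.
move: H1' En' r1 D2.
rewrite /upper /delta.
set a := (#|Aset n' d r|%:R : rat); set D := (d%:R : rat); set f := ((d`!)%:R : rat).
set k := (K%:R : rat); set rr := (r%:R : rat).
move=> H1' En' r1 D2.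
have Hk : rr + 2 * D - 1 = k + 1 by lra.
rewrite Hk ler_pdivlMr; last by rewrite mulr_gt0 ?ltr0n ?fact_gt0.
have D1' : 0 < D - 1 by lra.
have D1 : D - 1 != 0 by move: D1'; rewrite lt0r => /andP[].
have s_def : D * (1 - ((D - 2) / (D - 1)) ^+ 2) - 2 = (D - 2) / (D - 1) ^+ 2.
  by field.
set dl := (D - 2) / (D - 1) in s_def *.
have h1 : 2 <= D * (1 - dl ^+ 2).
  rewrite -subr_ge0 s_def divr_ge0 ?exprn_ge0 //; lra.
have hs : 0 <= 1 - dl ^+ 2.
  by rewrite -(pmulr_rge0 _ (_ : 0 < D)); [lra | lra].
have ha : 0 <= a by rewrite ler0n.
have hf : 0 <= f by rewrite ler0n.
have h3 : (rr - 2) ^+ d <= k ^+ d.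
  apply: Order.POrderTheory.le_trans (ler_norm _) _; rewrite normrX.
  apply: lerXn2r; rewrite ?nnegrE ?normr_ge0 //.
  rewrite ler_norml; apply/andP; split; lra.
have h4 : k ^+ d <= (k + 1) ^+ d.
  apply: lerXn2r; rewrite ?nnegrE; lra.
have e1 : 0 <= (D * (1 - dl ^+ 2) - 2) * (a * f).
  by apply: mulr_ge0; [lra | apply: mulr_ge0].
have e2 : 0 <= (1 - dl ^+ 2) * (k ^+ d - a * D * f).
  by apply: mulr_ge0 => //; lra.
have e3 : 0 <= dl ^+ 2 * (k ^+ d - (rr - 2) ^+ d).
  by apply: mulr_ge0; [apply: sqr_ge0 | lra].
move: e1 e2 e3 h4.
set P := k ^+ d; set Q := (k + 1) ^+ d; set R := (rr - 2) ^+ d; set sq := dl ^+ 2.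
move=> e1 e2 e3 h4.
nra.
Qed.
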